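(* Let $S$ be a numerical semigroup with minimal generators $a_1<a_2<\cdots<a_\nu$ ($\nu\ge 2$), multiplicity $\mu=a_1$ and conductor $c$, and suppose $a_2>\frac{c+\mu}{3}$. Let $\pi:\mathbb{Z}\to\mathbb{Z}/\mu\mathbb{Z}$ be the quotient map, $P=\{a_1,\dots,a_\nu\}$, $P_1=\{a\in P\setminus\{\mu\}: \tfrac13(c+\mu)<a<\tfrac12(c+\mu)\}$, $P_2=\{a\in P\setminus\{\mu\}: \tfrac12(c+\mu)\le a<\tfrac23(c+\mu)\}$, and $A=\pi(P)$, $A_1=\pi(P_1)$, $A_2=\pi(P_2)$. Then $$\mathbb{Z}/\mu\mathbb{Z}=A\cup(A_1+A_1)\cup(A_1+A_2).$$
   Context: A numerical semigroup is a submonoid $S\subseteq\mathbb{N}$ (containing $0$, closed under addition) with finite complement. Its minimal generating set is the unique minimal set of generators; its cardinality $\nu$ is the embedding dimension, and the smallest minimal generator $\mu$ is the multiplicity. The conductor $c$ is the least integer with $c+\mathbb{N}\subseteq S$ (i.e. Frobenius number plus one). For subsets $X,Y$ of $\mathbb{Z}/\mu\mathbb{Z}$, $X+Y=\{x+y: x\in X,y\in Y\}$. *)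

(* Defs.v *)
From mathcomp Require Import all_boot all_order all_algebra.
Set Implicit Arguments. Unset Strict Implicit. Unset Printing Implicit Defensive.

Definition numerical_semigroup (S : pred nat) : Prop :=
  [/\ S 0,
      (forall x y, S x -> S y -> S (x + y)) &
      exists N, forall n, N <= n -> S n].

(* Minimal generators of S: the nonzero elements of S that are not a sum of
   two nonzero elements of S (the unique minimal generating set). *)
Definition min_gen (S : pred nat) (a : nat) : Prop :=
  [/\ S a, 0 < a &
      ~ exists x y, [/\ S x, S y, 0 < x, 0 < y & a = x + y]].

Definition is_multiplicity (S : pred nat) (mu : nat) : Prop :=
  min_gen S mu /\ forall a, min_gen S a -> mu <= a.

Definition is_conductor (S : pred nat) (c : nat) : Prop :=
  (forall n, c <= n -> S n) /\
  (forall m, (forall n, m <= n -> S n) -> c <= m).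

(* Main.v *)
Require Import Defs.
From mathcomp Require Import all_boot all_order all_algebra.
From mathcomp Require Import zify.
From Stdlib Require Classical_Prop.
Import GRing.Theory.
Local Open Scope ring_scope.

Lemma Zp_surj (m : nat) (Hm : (1 < m)%N) (x : 'Z_m) : exists k : nat, (k%:R : 'Z_m) = x.
Proof.
case: m Hm x => [|[|m]] // _ x; exists (nat_of_ord x); exact: natr_Zp.
Qed.

Lemma ge_mu (S : pred nat) mu : is_multiplicity S mu ->
  forall t, S t -> (0 < t)%N -> (mu <= t)%N.
Proof.
move=> [_ Hm] t; elim: t {-2}t (leqnn t) => [|n IH] t Ht St tp.
  by exfalso; lia.
case: (Classical_Prop.classic (min_gen S t)) => [g|ng'].
  by apply: Hm.
have : exists x y, [/\ S x, S y, (0 < x)%N, (0 < y)%N & t = (x + y)%N].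
  apply: Classical_Prop.NNPP => H; apply: ng'; by split.
move=> [x [y [Sx Sy xp yp E]]].
have xn : (x <= n)%N by lia.
have := IH x xn Sx xp; rewrite E; lia.
Qed.

Arguments ge_mu {S mu}.

Lemma ge_a2 (S : pred nat) mu a2 : numerical_semigroup S -> is_multiplicity S mu ->
  (forall a, min_gen S a -> (mu < a)%N -> (a2 <= a)%N) ->
  forall t, S t -> ~ S (t - mu)%N -> (a2 <= t)%N.
Proof.
move=> [S0 Sadd _] Hmu Ha2 t; elim: t {-2}t (leqnn t) => [|n IH] t Ht St nS.
  have E : t = 0%N by lia.
  by exfalso; apply: nS; rewrite E.
have tp : (0 < t)%N by rewrite lt0n; apply/negP => /eqP E; apply: nS; rewrite E.
have mt := ge_mu Hmu _ St tp.
case: (Classical_Prop.classic (min_gen S t)) => [g|ng'].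
  apply: Ha2; first by [].
  have [E|NE] := eqVneq mu t; last lia.
  by exfalso; apply: nS; rewrite -E subnn.
have : exists x y, [/\ S x, S y, (0 < x)%N, (0 < y)%N & t = (x + y)%N].
  apply: Classical_Prop.NNPP => H; apply: ng'; by split.
move=> [x [y [Sx Sy xp yp E]]].
have mx := ge_mu Hmu _ Sx xp.
have nx : ~ S (x - mu)%N.
  move=> H; apply: nS; have -> : (t - mu = (x - mu) + y)%N by lia.
  by apply: Sadd.
have := IH x ltac:(lia) Sx nx; lia.
Qed.

Arguments ge_a2 {S mu a2}.

Theorem proposition2p1 (S : pred nat) (mu c a2 : nat) :
  numerical_semigroup S ->
  is_multiplicity S mu ->
  is_conductor S c ->
  min_gen S a2 -> (mu < a2)%N ->
  (forall a, min_gen S a -> (mu < a)%N -> (a2 <= a)%N) ->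
  (c + mu < 3 * a2)%N ->
  forall (Hmu : (1 < mu)%N) (x : 'Z_mu),
    (exists a, min_gen S a /\ (a%:R : 'Z_mu) = x)
    \/ (exists a b,
          (min_gen S a /\ a <> mu /\ (c + mu < 3 * a)%N /\ (2 * a < c + mu)%N) /\
          (min_gen S b /\ b <> mu /\ (c + mu < 3 * b)%N /\ (2 * b < c + mu)%N) /\
          (a%:R + b%:R : 'Z_mu) = x)
    \/ (exists a b,
          (min_gen S a /\ a <> mu /\ (c + mu < 3 * a)%N /\ (2 * a < c + mu)%N) /\
          (min_gen S b /\ b <> mu /\ (c + mu <= 2 * b)%N /\ (3 * b < 2 * (c + mu))%N) /\
          (a%:R + b%:R : 'Z_mu) = x).
Proof.
move=> HS Hm Hc Ga2 mua2 Ha2 H3 Hmu x.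
have HS' := HS; case: HS' => [S0 Sadd _].
have [Sc _] := Hc.
have mu0 : (mu%:R : 'Z_mu) = 0 by exact: pchar_Zp.
have [x0|xn0] := eqVneq x 0.
  by left; exists mu; split; [case: Hm| rewrite mu0].
have [k Hk] := Zp_surj _ Hmu x.
have exP : exists n, (fun n => S n && ((n%:R : 'Z_mu) == x)) n.
  exists (c * mu + k)%N; apply/andP; split.
    apply: Sc; apply: leq_trans (leq_addr k _); rewrite leq_pmulr //; lia.
  by rewrite natrD natrM mu0 mulr0 add0r Hk.
case: (ex_minnP exP) => s /andP[Ss /eqP sx] smin.
have sp : (0 < s)%N.
  rewrite lt0n; apply/negP => /eqP E; move: sx; rewrite E => sx. by rewrite -sx eqxx in xn0.
have ms := ge_mu Hm _ Ss sp.
have subx : ((s - mu)%:R : 'Z_mu) = x.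
  by rewrite -sx -{2}(subnK ms) natrD mu0 addr0.
have nS : ~ S (s - mu)%N.
  move=> H; have := smin (s - mu)%N; rewrite H subx eqxx => /(_ isT); lia.
have slt : (s < c + mu)%N.
  rewrite ltnNge; apply/negP => H; apply: nS; apply: Sc; lia.
case: (Classical_Prop.classic (min_gen S s)) => [g|ng'].
  by left; exists s; split.
have : exists y z, [/\ S y, S z, (0 < y)%N, (0 < z)%N & s = (y + z)%N].
  apply: Classical_Prop.NNPP => H; apply: ng'; by split.
move=> [y [z [Sy Sz yp zp E]]].
have my := ge_mu Hm _ Sy yp.
have mz := ge_mu Hm _ Sz zp.
have ny : ~ S (y - mu)%N.
  move=> H; apply: nS; have -> : (s - mu = (y - mu) + z)%N by clear -E my; lia. by apply: Sadd.
have nz : ~ S (z - mu)%N.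
  move=> H; apply: nS; have -> : (s - mu = y + (z - mu))%N by clear -E mz; lia. by apply: Sadd.
have ay := ge_a2 HS Hm Ha2 _ Sy ny.
have az := ge_a2 HS Hm Ha2 _ Sz nz.
have gen : forall u v, S u -> ~ S (u - mu)%N -> S v -> (0 < v)%N -> (a2 <= v)%N ->
    s = (u + v)%N -> min_gen S u.
  move=> u v Su nu Sv vp av Es.
  have up : (0 < u)%N by rewrite lt0n; apply/negP => /eqP E0; apply: nu; rewrite E0.
  split=> // -[p [q [Sp Sq pp qp Eu]]].
  have mp := ge_mu Hm _ Sp pp.
  have mq := ge_mu Hm _ Sq qp.
  have np : ~ S (p - mu)%N.
    move=> H; apply: nu; have -> : (u - mu = (p - mu) + q)%N by clear -Eu mp; lia. by apply: Sadd.
  have nq : ~ S (q - mu)%N.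
    move=> H; apply: nu; have -> : (u - mu = p + (q - mu))%N by clear -Eu mq; lia. by apply: Sadd.
  have := ge_a2 HS Hm Ha2 _ Sp np; have := ge_a2 HS Hm Ha2 _ Sq nq.
  move=> h1 h2; clear -h1 h2 Eu Es av H3 slt; lia.
have gy : min_gen S y by apply: (gen y z).
have gz : min_gen S z by apply: (gen z y) => //; rewrite addnC.
have yn : y <> mu by move=> E0; apply: ny; rewrite E0 subnn.
have zn : z <> mu by move=> E0; apply: nz; rewrite E0 subnn.
have sum : (y%:R + z%:R : 'Z_mu) = x by rewrite -natrD -E.
have sum' : (z%:R + y%:R : 'Z_mu) = x by rewrite addrC.
right.
clear -gy gz yn zn sum sum' E slt H3 ay az.
wlog yz : y z E ay az gy gz yn zn sum sum' / (y <= z)%N.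
  move=> W; case: (leqP y z) => H; first exact: (W y z).
  apply: (W z y) => //; [by rewrite addnC | exact: ltnW].
case: (ltnP (2 * z) (c + mu)) => H.
  left; exists y, z; do !split => //; lia.
right; exists y, z; do !split => //; lia.
Qed.
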